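(* Let $c$ be a twisted cap-cup cycle with $T(c) = \pm 2$. Then there exists an unknot diagram $g \in \mathbb{CC}$ such that $W(g) = W(c)$ and $\mathrm{ccc}(g) = U(c)$.
   Context: $\mathbb{CC}$ is the free (strict) braided monoidal category generated by objects $\uparrow, \downarrow$ and four generating morphisms, with no equations imposed between them: caps $\mathrm{cap}_r : I \to \uparrow \otimes \downarrow$, $\mathrm{cap}_l : I \to \downarrow \otimes \uparrow$ and cups $\mathrm{cup}_r : \downarrow \otimes \uparrow \to I$, $\mathrm{cup}_l : \uparrow \otimes \downarrow \to I$. Wires are oriented according to their labels. A knot (diagram) in $\mathbb{CC}$ is a morphism $I \to I$ whose string diagram has a single connected component; it is an unknot diagram if the knot it depicts (interpreting caps and cups as arcs) is isotopic to the unknot in the usual (general) sense. The writhe $W(g)$ of a diagram is the sum of the signs of its crossings (the braiding $\sigma$ between equally oriented strands counts $+1$, $\sigma^{-1}$ counts $-1$, i.e.\ the standard sign of oriented crossings). The turning numbers of the generators are $t(\mathrm{cap}_r) = +1$, $t(\mathrm{cap}_l) = -1$, $t(\mathrm{cup}_r) = -1$, $t(\mathrm{cup}_l) = +1$. A cap-cup cycle is a finite sequence of elements of $\{\mathrm{cap}_l, \mathrm{cap}_r, \mathrm{cup}_l, \mathrm{cup}_r\}$ up to cyclic permutation in which caps and cups alternate. For a knot $g$, $\mathrm{ccc}(g)$ is the cap-cup cycle recorded by following the strand along its orientation once around. A twisted cap-cup is an element $(x, w)$ of $\{\mathrm{cap}_l, \mathrm{cap}_r, \mathrm{cup}_l,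 \mathrm{cup}_r\} \times \mathbb{Z}$ (thought of as the cap/cup $x$ composed with braidings of total writhe $w$); its turning number is $T((x,w)) = (-1)^{|w|} t(x)$ and its writhe is $W((x,w)) = w$. A twisted cap-cup cycle is a finite sequence of twisted cap-cups up to cyclic permutation in which caps and cups alternate; its turning number $T(c)$ and writhe $W(c)$ are the sums of those of its elements, and $U(c)$ is the cap-cup cycle obtained by forgetting the integer component of each element. *)

(* Defs.v *)
From mathcomp Require Import all_boot all_algebra.
From Stdlib Require Import Relations.
Set Implicit Arguments. Unset Strict Implicit. Unset Printing Implicit Defensive.
Import GRing.Theory.
Local Open Scope ring_scope.

Inductive cc := cap_l | cap_r | cup_l | cup_r.

Definition is_cap (x : cc) : bool :=
  match x with cap_l | cap_r => true | _ => false end.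

Definition turning (x : cc) : int :=
  match x with cap_r => 1 | cap_l => -1 | cup_r => -1 | cup_l => 1 end.

(* String diagrams of the free strict braided monoidal category CC.         *)
(* Objects: words in {up, down}; true = up (↑), false = down (↓).           *)
(* A morphism is represented by a layered word: each layer is (k, g) =      *)
(* id_(k wires) ⊗ g ⊗ id_(remaining wires), composed bottom (source) to top. *)
(* G_braid x y true  = σ_{x,y}        : x⊗y -> y⊗x                          *)
(* G_braid x y false = σ^{-1}_{y,x}   : x⊗y -> y⊗x                          *)
Definition obj := seq bool.

Inductive gen := G_cc of cc | G_braid of bool & bool & bool.

Definition gsrc (g : gen) : obj :=
  match g with
  | G_cc cap_l | G_cc cap_r => [::]
  | G_cc cup_r => [:: false; true]
  | G_cc cup_l => [:: true; false]
  | G_braid x y _ => [:: x; y]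
  end.

Definition gtgt (g : gen) : obj :=
  match g with
  | G_cc cap_r => [:: true; false]
  | G_cc cap_l => [:: false; true]
  | G_cc cup_r | G_cc cup_l => [::]
  | G_braid x y _ => [:: y; x]
  end.

Definition layer := (nat * gen)%type.
Definition diagram := seq layer.

Definition apply_layer (o : obj) (l : layer) : option obj :=
  let: (k, g) := l in
  if ((k + size (gsrc g) <= size o)%N && (take (size (gsrc g)) (drop k o) == gsrc g))
  then Some (take k o ++ gtgt g ++ drop (k + size (gsrc g)) o)
  else None.

Fixpoint run (o : obj) (d : diagram) : option obj :=
  match d with
  | [::] => Some o
  | l :: d' => if apply_layer o l is Some o' then run o' d' else None
  end.

Definition typed (d : diagram) : bool := run [::] d == Some [::].

Fixpoint levels (o : obj) (d : diagram) : seq obj :=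
  o :: match d with
       | [::] => [::]
       | l :: d' => levels (odflt [::] (apply_layer o l)) d'
       end.

Definition lev (d : diagram) (t : nat) : obj := nth [::] (levels [::] d) t.

(* points of the string diagram: (level t, wire position p) *)
Definition points (d : diagram) : seq (nat * nat) :=
  flatten [seq [seq (t, p) | p <- iota 0 (size (lev d t))] | t <- iota 0 (size d).+1].

(* one step along the strand, following its orientation; records the
   cap/cup passed through, if any *)
Definition step (d : diagram) (s : nat * nat) : (nat * nat) * option cc :=
  let: (t, p) := s in
  if nth false (lev d t) p then
    (* moving up through layer t *)
    let: (k, g) := nth (0%N, G_cc cap_l) d t in
    if (p < k)%N then ((t.+1, p), None)
    else if (k + size (gsrc g) <= p)%N then ((t.+1, p - size (gsrc g) + size (gtgt g))%N, None)
    else match g with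
         | G_braid _ _ _ => ((t.+1, k + (1 - (p - k)))%N, None)
         | G_cc x => ((t, k + (1 - (p - k)))%N, Some x)  (* a cup *)
         end
  else
    (* moving down through layer t-1 *)
    let: (k, g) := nth (0%N, G_cc cap_l) d t.-1 in
    if (p < k)%N then ((t.-1, p), None)
    else if (k + size (gtgt g) <= p)%N then ((t.-1, p - size (gtgt g) + size (gsrc g))%N, None)
    else match g with
         | G_braid _ _ _ => ((t.-1, k + (1 - (p - k)))%N, None)
         | G_cc x => ((t, k + (1 - (p - k)))%N, Some x)  (* a cap *)
         end.

Fixpoint orbit (d : diagram) (s : nat * nat) (n : nat) : seq (nat * nat) :=
  if n is n'.+1 then s :: orbit d (step d s).1 n' else [::].

Fixpoint turns (d : diagram) (s : nat * nat) (n : nat) : seq cc :=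
  if n is n'.+1 then
    let: (s', o) := step d s in
    (if o is Some x then [:: x] else [::]) ++ turns d s' n'
  else [::].

Definition start (d : diagram) : nat * nat := head (0%N, 0%N) (points d).

(* a knot: a morphism I -> I whose string diagram is a single closed strand *)
Definition is_knot (d : diagram) : bool :=
  [&& typed d, (0 < size (points d))%N,
      uniq (orbit d (start d) (size (points d))) &
      all (fun s => s \in points d) (orbit d (start d) (size (points d)))].

(* ccc(g): the cap-cup cycle read once around the strand (a representative
   of the cycle; cycles are compared up to rotation with cyc_eq) *)
Definition ccc (d : diagram) : seq cc := turns d (start d) (size (points d)).

(* sign of an oriented crossing (standard convention, σ_{↑,↑} = +1) *)
Definition crossing_sign (g : gen) : int :=
  match g with
  | G_braid x y s => (if s then 1 else -1) * (if x == y then 1 else -1)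
  | G_cc _ => 0
  end.

Definition writhe (d : diagram) : int := \sum_(l <- d) crossing_sign l.2.

(* Isotopy of diagrams: equivalence generated by local moves, namely the     *)
(* axioms of strict braided monoidal categories (interchange, σσ^{-1}=id,    *)
(* naturality of σ incl. hexagon decomposition, which yields R2/R3 and       *)
(* sliding of caps/cups), the zigzag (planar isotopy) moves and R1 moves.    *)
Definition pass_left (s : bool) (k : nat) (X : obj) (c : bool) : diagram :=
  [seq ((k + i)%N, G_braid (nth false X i) c s) | i <- rev (iota 0 (size X))].

Definition pass_right (s : bool) (k : nat) (c : bool) (X : obj) : diagram :=
  [seq ((k + i)%N, G_braid c (nth false X i) s) | i <- iota 0 (size X)].

Inductive local_move : diagram -> diagram -> Prop :=
| lm_interchange k1 g1 k2 g2 : (k1 + size (gtgt g1) <= k2)%N ->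
    local_move [:: (k1, g1); (k2, g2)]
               [:: ((k2 - size (gtgt g1) + size (gsrc g1))%N, g2); (k1, g1)]
| lm_R2 k x y s :
    local_move [:: (k, G_braid x y s); (k, G_braid y x (~~ s))] [::]
| lm_nat_left k g s c :
    local_move ((k, g) :: pass_left s k (gtgt g) c)
               (rcons (pass_left s k (gsrc g) c) (k.+1, g))
| lm_nat_right k g s c :
    local_move ((k.+1, g) :: pass_right s k c (gtgt g))
               (rcons (pass_right s k c (gsrc g)) (k, g))
| lm_zig1 k : local_move [:: (k.+1, G_cc cap_r); (k, G_cc cup_r)] [::]
| lm_zig2 k : local_move [:: (k.+1, G_cc cap_l); (k, G_cc cup_l)] [::]
| lm_zig3 k : local_move [:: (k, G_cc cap_r); (k.+1, G_cc cup_r)] [::]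
| lm_zig4 k : local_move [:: (k, G_cc cap_l); (k.+1, G_cc cup_l)] [::]
| lm_R1cap_r k s : local_move [:: (k, G_cc cap_r); (k, G_braid true false s)] [:: (k, G_cc cap_l)]
| lm_R1cap_l k s : local_move [:: (k, G_cc cap_l); (k, G_braid false true s)] [:: (k, G_cc cap_r)]
| lm_R1cup_r k s : local_move [:: (k, G_braid true false s); (k, G_cc cup_r)] [:: (k, G_cc cup_l)]
| lm_R1cup_l k s : local_move [:: (k, G_braid false true s); (k, G_cc cup_l)] [:: (k, G_cc cup_r)].

Definition iso_step (d d' : diagram) : Prop :=
  typed d /\ typed d' /\
  exists pre post lhs rhs, local_move lhs rhs /\
    d = pre ++ lhs ++ post /\ d' = pre ++ rhs ++ post.

Definition isotopic : relation diagram := clos_refl_sym_trans diagram iso_step.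

Definition round_unknot : diagram := [:: (0%N, G_cc cap_r); (0%N, G_cc cup_l)].

Definition unknot_diagram (d : diagram) : Prop :=
  is_knot d /\ isotopic d round_unknot.

Definition cyc_eq (T : Type) (s t : seq T) : Prop := exists n, rot n s = t.

Definition alternating (s : seq cc) : bool :=
  all (fun i => is_cap (nth cap_l s i) != is_cap (nth cap_l s (i.+1 %% size s)))
      (iota 0 (size s)).

Definition tcc := (cc * int)%type.

Definition is_tcc_cycle (c : seq tcc) : bool := alternating (map fst c).

Definition tT (e : tcc) : int := (-1) ^+ `|e.2|%N * turning e.1.
Definition Tc (c : seq tcc) : int := \sum_(e <- c) tT e.
Definition Wc (c : seq tcc) : int := \sum_(e <- c) e.2.
Definition Uc (c : seq tcc) : seq cc := map fst c.

(* Main.v *)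
From HB Require Import structures.
Require Import Defs.
From mathcomp Require Import all_boot all_algebra zify.
From Stdlib Require Import Relations.
Set Implicit Arguments. Unset Strict Implicit. Unset Printing Implicit Defensive.

Definition stepL (o : obj) (d : diagram) (s : nat * nat) : (nat * nat) * option cc :=
  let: (t, p) := s in
  if nth false (nth [::] (levels o d) t) p then
    let: (k, g) := nth (0%N, G_cc cap_l) d t in
    if (p < k)%N then ((t.+1, p), None)
    else if (k + size (gsrc g) <= p)%N then ((t.+1, p - size (gsrc g) + size (gtgt g))%N, None)
    else match g with
         | G_braid _ _ _ => ((t.+1, k + (1 - (p - k)))%N, None)
         | G_cc x => ((t, k + (1 - (p - k)))%N, Some x)
         end
  else
    let: (k, g) := nth (0%N, G_cc cap_l) d t.-1 in
    if (p < k)%N then ((t.-1, p), None)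
    else if (k + size (gtgt g) <= p)%N then ((t.-1, p - size (gtgt g) + size (gsrc g))%N, None)
    else match g with
         | G_braid _ _ _ => ((t.-1, k + (1 - (p - k)))%N, None)
         | G_cc x => ((t, k + (1 - (p - k)))%N, Some x)
         end.

Lemma step_stepL d s : step d s = stepL [::] d s.
Proof. by []. Qed.

Lemma levels_prefix P R o t : t <= size P ->
  nth [::] (levels o (P ++ R)) t = nth [::] (levels o P) t.
Proof.
elim: P o t => [|l P IH] o t /=.
  by rewrite leqn0 => /eqP ->; case: R.
by case: t => // t Ht; rewrite /= IH.
Qed.

Lemma levels_suffix P R o o' j : run o P = Some o' ->
  nth [::] (levels o (P ++ R)) (size P + j) = nth [::] (levels o' R) j.
Proof.
elim: P o => [|l P IH] o /=; first by case=> ->.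
by case E: (apply_layer o l) => [o1|] // H; rewrite (IH _ H).
Qed.

Lemma run_cat o A B : run o (A ++ B) = if run o A is Some o' then run o' B else None.
Proof.
elim: A o => [|l A IH] o //=.
by case: (apply_layer o l).
Qed.

Definition shiftp (h : nat) (x : nat * nat) : nat * nat := (h + x.1, x.2).
Definition shiftS h (r : (nat * nat) * option cc) := (shiftp h r.1, r.2).

Lemma stepL_shift o o' P R j p : run o P = Some o' ->
  (~~ nth false (nth [::] (levels o' R) j) p -> 0 < j) ->
  stepL o (P ++ R) (size P + j, p) = shiftS (size P) (stepL o' R (j, p)).
Proof.
move=> HP Hd; rewrite /stepL (levels_suffix _ _ HP).
case: ifP => dir.
  rewrite nth_cat ltnNge leq_addr /= addKn.
  case: (nth _ R j) => k g.
  case: ifP => _; first by rewrite /shiftS /shiftp /= addnS.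
  case: ifP => _; first by rewrite /shiftS /shiftp /= addnS.
  by case: g => * ; rewrite /shiftS /shiftp /= ?addnS.
have := Hd (negbT dir); case: j {Hd} dir => // j _ _.
rewrite addnS /= nth_cat ltnNge leq_addr /= addKn.
case: (nth _ R j) => k g.
case: ifP => _; first by [].
case: ifP => _; first by [].
by case: g => * ; rewrite /shiftS /shiftp /= ?addnS.
Qed.

Definition goodL o d (x : nat * nat) : bool :=
  (x.1 <= size d) &&
  (if nth false (nth [::] (levels o d) x.1) x.2 then x.1 < size d else 0 < x.1).

Lemma stepL_prefix o B Q x : goodL o B x -> stepL o (B ++ Q) x = stepL o B x.
Proof.
case: x => j p; rewrite /goodL /= => /andP [Hj].
rewrite /stepL (@levels_prefix B Q o j Hj).
case: ifP => dir H.
  by rewrite nth_cat H.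
by rewrite nth_cat; case: j H Hj dir => //= j _ Hj _; rewrite Hj.
Qed.

Fixpoint chainP (f : nat * nat -> (nat * nat) * option cc) (x : nat * nat)
   (L : seq (nat * nat)) (R : seq (option cc)) : Prop :=
  match L, R with
  | [::], [::] => True
  | y :: L', r :: R' => f x = (y, r) /\ chainP f y L' R'
  | _, _ => False
  end.

Fixpoint chainL o d (x : nat * nat) (L : seq (nat * nat)) (R : seq (option cc)) : Prop :=
  match L, R with
  | [::], [::] => True
  | y :: L', r :: R' => goodL o d x /\ stepL o d x = (y, r) /\ chainL o d y L' R'
  | _, _ => False
  end.

Lemma chainL_lift P S B x L R : run [::] P = Some S -> chainL S B x L R ->
  forall Q, chainP (step (P ++ B ++ Q)) (shiftp (size P) x) (map (shiftp (size P)) L) R.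
Proof.
move=> HP; elim: L x R => [|y L IH] x [|r R] // [Hg [Hs Hc]] Q; split; last exact: IH.
case: x Hg Hs => j p Hg Hs.
have -> : step (P ++ B ++ Q) (shiftp (size P) (j,p)) = stepL [::] (P ++ (B ++ Q)) (size P + j, p) by [].
rewrite (@stepL_shift [::] S P (B ++ Q) j p HP); last first.
  move: Hg; rewrite /goodL /= => /andP [Hj]; rewrite (@levels_prefix B Q S j Hj).
  by case: ifP.
by rewrite (stepL_prefix _ Hg) Hs.
Qed.

Fixpoint trav o d x n : seq (nat * nat) * seq (option cc) :=
  match n with
  | 0 => ([::], [::])
  | n'.+1 => if goodL o d x then
               let: (y, r) := stepL o d x in
               let: (L, R) := trav o d y n' in (y :: L, r :: R)
             else ([::], [::])
  end.

Lemma trav_chain o d x n : chainL o d x (trav o d x n).1 (trav o d x n).2.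
Proof.
elim: n x => [|n IH] x //=.
case: ifP => // Hg.
case E: (stepL o d x) => [y r].
move: (IH y); case: (trav o d y n) => L R /= H.
by [].
Qed.
Definition cc2n (x : cc) : nat := match x with cap_l => 0 | cap_r => 1 | cup_l => 2 | cup_r => 3 end.
Definition n2cc (n : nat) : cc := match n with 0 => cap_l | 1 => cap_r | 2 => cup_l | _ => cup_r end.
Lemma cc2nK : cancel cc2n n2cc. Proof. by case. Qed.
HB.instance Definition _ := Equality.copy cc (can_type cc2nK).

Definition localpts o B : seq (nat * nat) :=
  flatten [seq [seq (t, p) | p <- iota 0 (size (nth [::] (levels o B) t))] | t <- iota 1 (size B)].

Lemma points_cat P S B : run [::] P = Some S ->
  points (P ++ B) = points P ++ map (shiftp (size P)) (localpts S B).
Proof.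
move=> HP; rewrite /points /localpts size_cat -addSn iotaD map_cat flatten_cat.
congr (_ ++ _).
  congr flatten; apply/eq_in_map => t; rewrite mem_iota add0n ltnS => /andP [_ Ht].
  by rewrite /lev (@levels_prefix P B [::] t Ht).
rewrite add0n -addn1 iotaDl -map_comp map_flatten -!map_comp.
congr flatten; apply/eq_map => t /=; rewrite /lev (levels_suffix _ _ HP) -map_comp.
by apply/eq_map.
Qed.

Lemma points_uniq d : uniq (points d).
Proof.
rewrite /points.
apply: (@allpairs_uniq_dep nat (fun _ => nat : eqType) _ (fun t p => (t, p))).
- exact: iota_uniq.
- by move=> t _; exact: iota_uniq.
- by move=> [t1 p1] [t2 p2] _ _ /= [-> ->].
Qed.

Definition dpos (S : obj) := index false S.
Definition upos (S : obj) := index true S.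
Definition otoseq (o : option cc) : seq cc := if o is Some x then [:: x] else [::].

Definition blockOK (S : obj) (B : diagram) (S' : obj) (dn up : seq cc) : bool :=
  let n := size B in
  let xd := (n, dpos S') in let xu := (0, upos S) in
  let tD := trav S B xd 60 in let tU := trav S B xu 60 in
  [&& run S B == Some S', last xd tD.1 == (0, dpos S), last xu tU.1 == (n, upos S'),
      perm_eq (belast xd tD.1 ++ tU.1) (localpts S B),
      flatten (map otoseq tD.2) == dn & flatten (map otoseq tU.2) == up].

Definition Arc P S x L R : Prop :=
  [/\ run [::] P = Some S, perm_eq (x :: L) (points P), x = (size P, dpos S),
      last x L = (size P, upos S) & forall Q, chainP (step (P ++ Q)) x L R].

Lemma chainP_cat f x L1 R1 L2 R2 : chainP f x L1 R1 -> chainP f (last x L1) L2 R2 ->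
  chainP f x (L1 ++ L2) (R1 ++ R2).
Proof.
elim: L1 x R1 => [|y L1 IH] x [|r R1] //= [H1 H2] H3; split => //; exact: IH.
Qed.

Lemma Arc_ext P S x L R B S' dn up : Arc P S x L R -> blockOK S B S' dn up ->
  exists x' L' R', Arc (P ++ B) S' x' L' R' /\
     flatten (map otoseq R') = dn ++ flatten (map otoseq R) ++ up.
Proof.
move=> [HP Hperm Hx Hlast Hch] /and5P [/eqP HB /eqP Hd /eqP Hu Hpe /andP [/eqP Hdn /eqP Hup]].
set h := size P.
set xd := (size B, dpos S') in Hd Hpe Hdn *.
set xu := (0, upos S) in Hu Hpe Hup *.
set tD := trav S B xd 60 in Hd Hpe Hdn *.
set tU := trav S B xu 60 in Hu Hpe Hup *.
have cD := trav_chain S B xd 60; have cU := trav_chain S B xu 60.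
rewrite -/tD -/tU in cD cU.
exists (shiftp h xd), (map (shiftp h) tD.1 ++ L ++ map (shiftp h) tU.1), (tD.2 ++ R ++ tU.2).
have lastD : last (shiftp h xd) (map (shiftp h) tD.1) = x.
  by rewrite last_map Hd Hx /shiftp /= addn0.
split; last by rewrite !map_cat !flatten_cat Hdn Hup.
split.
- by rewrite run_cat HP.
- rewrite (points_cat _ HP) -cat_cons.
  have -> : shiftp h xd :: map (shiftp h) tD.1 = rcons (map (shiftp h) (belast xd tD.1)) x.
    by rewrite -map_cons lastI map_rcons Hd Hx /shiftp /= addn0.
  rewrite cat_rcons -cat_cons perm_catCA -map_cat; apply: perm_cat => //.
  exact: perm_map.
- by rewrite /shiftp /= size_cat.
- have Hxu : (size P, upos S) = shiftp h xu by rewrite /shiftp /= addn0.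
  by rewrite !last_cat lastD Hlast Hxu last_map Hu /shiftp /= size_cat.
- move=> Q; apply: chainP_cat.
    by have := chainL_lift HP cD Q; rewrite catA.
  rewrite lastD; apply: chainP_cat; first by have := Hch (B ++ Q); rewrite catA.
  rewrite Hlast.
  have -> : (size P, upos S) = shiftp h xu by rewrite /shiftp /= addn0.
  by have := chainL_lift HP cU Q; rewrite catA.
Qed.

Lemma chainP_nth f x L R x0 : chainP f x L R -> size R = size L /\
  forall j, j < size L -> f (nth x0 (x :: L) j) = (nth x0 L j, nth None R j).
Proof.
elim: L x R => [|y L IH] x [|r R] //= [H1 H2].
have [IH1 IH2] := IH _ _ H2; split; first by rewrite IH1.
by case=> [|j] //= Hj; apply: IH2.
Qed.

Definition Closed d C Rc : Prop :=
  [/\ typed d, perm_eq C (points d), 0 < size C, size Rc = size C &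
      forall j, j < size C -> step d (nth (0,0) C j) = (nth (0,0) C (j.+1 %% size C), nth None Rc j)].

Definition closeOK S b : bool :=
  [&& run S [:: (0, G_cc b)] == Some [::], localpts S [:: (0, G_cc b)] == [::] &
      trav S [:: (0, G_cc b)] (0, upos S) 60 == ([:: (0, dpos S)], [:: Some b])].

Lemma Arc_close P S x L R b : Arc P S x L R -> closeOK S b ->
  Closed (P ++ [:: (0, G_cc b)]) (x :: L) (rcons R (Some b)).
Proof.
move=> [HP Hperm Hx Hlast Hch] /and3P [/eqP HB /eqP Hl /eqP Ht].
set Bt := [:: (0, G_cc b)] in HB Hl Ht *.
have cT := trav_chain S Bt (0, upos S) 60; rewrite Ht in cT.
have := chainL_lift HP cT [::]; rewrite cats0 => -[Hs _].
have [HRL Hn] := chainP_nth (0,0) (Hch Bt).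
split => //.
- by rewrite /typed run_cat HP HB.
- by rewrite (points_cat _ HP) Hl cats0.
- by rewrite size_rcons HRL.
move=> j; rewrite ltnS leq_eqVlt => /orP [/eqP ->|Hj].
  rewrite modnn /= nth_rcons HRL ltnn eqxx.
  have -> : nth (0, 0) (x :: L) (size L) = last x L.
    by rewrite -[size L]/((size (x :: L)).-1) nth_last.
  rewrite Hlast; move: Hs; rewrite /shiftp /= !addn0 => ->.
  by rewrite Hx.
rewrite modn_small ?ltnS // Hn // nth_rcons HRL Hj.
by [].
Qed.

Lemma nth_rot_mod T (x0 : T) (C : seq T) i j : i < size C -> j < size C ->
  nth x0 (rot i C) j = nth x0 C ((i + j) %% size C).
Proof.
move=> Hi Hj; rewrite /rot nth_cat size_drop.
case: ltnP => H.
  by rewrite nth_drop modn_small //; lia.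
rewrite nth_take; last by lia.
have -> : i + j = (j - (size C - i)) + size C by lia.
rewrite modnDr modn_small //; lia.
Qed.

Lemma rot_as_map T (x0 : T) (C : seq T) i : i < size C ->
  rot i C = [seq nth x0 C ((i + j) %% size C) | j <- iota 0 (size C)].
Proof.
move=> Hi; apply: (@eq_from_nth _ x0); first by rewrite size_rot size_map size_iota.
move=> j; rewrite size_rot => Hj.
by rewrite nth_rot_mod // (nth_map 0) ?size_iota // nth_iota.
Qed.

Lemma orbit_cyc d C Rc x0 : 0 < size C ->
  (forall j, j < size C -> step d (nth x0 C j) = (nth x0 C (j.+1 %% size C), nth None Rc j)) ->
  forall m k, Defs.orbit d (nth x0 C (k %% size C)) m = [seq nth x0 C ((k + j) %% size C) | j <- iota 0 m] /\
   turns d (nth x0 C (k %% size C)) m = flatten [seq otoseq (nth None Rc ((k + j) %% size C)) | j <- iota 0 m].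
Proof.
move=> Hn Hs; elim=> [|m IH] k //=.
rewrite Hs ?ltn_mod // /=.
have -> : (k %% size C).+1 %% size C = k.+1 %% size C by rewrite -addn1 modnDml addn1.
have [IH1 IH2] := IH k.+1.
rewrite IH1 IH2 addn0 -[1]/(1 + 0) iotaDl -!map_comp; split.
  by congr (_ :: _); apply: eq_map => j /=; rewrite addnA addn1.
by congr (_ ++ _); congr flatten; apply: eq_map => j /=; rewrite addnA addn1.
Qed.

Definition cyc_eq' (s t : seq cc) := exists n, rot n s = t.

Lemma cyc_flatten_rot (Y : seq (seq cc)) i : cyc_eq (flatten (rot i Y)) (flatten Y).
Proof.
exists (size (flatten (drop i Y))).
have -> : flatten (rot i Y) = flatten (drop i Y) ++ flatten (take i Y) by rewrite /rot flatten_cat.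
by rewrite rot_size_cat -flatten_cat cat_take_drop.
Qed.

Lemma Closed_knot d C Rc : Closed d C Rc ->
  is_knot d /\ cyc_eq (ccc d) (flatten (map otoseq Rc)).
Proof.
move=> [Hty Hperm Hn HR Hs].
have Hsz : size (points d) = size C by rewrite (perm_size Hperm).
have Hst : start d \in C.
  rewrite (perm_mem Hperm) /start.
  have : 0 < size (points d) by rewrite Hsz.
  by case: (points d) => [|p ps] // _; rewrite /= mem_head.
set i := index (start d) C.
have Hi : i < size C by rewrite index_mem.
have Hsi : start d = nth (0,0) C (i %% size C) by rewrite modn_small // nth_index.
have [Ho Ht] := orbit_cyc Hn Hs (size C) i.
have Horb : Defs.orbit d (start d) (size (points d)) = rot i C.
  by rewrite Hsz Hsi Ho (rot_as_map (0,0)).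
split.
  apply/and4P; split => //; first by rewrite Hsz.
    by rewrite Horb rot_uniq (perm_uniq Hperm) points_uniq.
  by rewrite Horb; apply/allP => s; rewrite mem_rot (perm_mem Hperm).
rewrite /ccc Hsz Hsi Ht.
have -> : flatten [seq otoseq (nth None Rc ((i + j) %% size C)) | j <- iota 0 (size C)]
        = flatten (map otoseq (rot i Rc)).
  rewrite (rot_as_map None) ?HR // -map_comp.
  by [].
rewrite map_rot; exact: cyc_flatten_rot.
Qed.

Definition frameS (b : bool) : obj := if b then [:: true; false] else [:: false; true].

Definition gadget (b : bool) (y z : cc) : diagram :=
  let k := if b then 0 else 1 in
  match y, z with
  | cup_r, cap_r => [:: (k, G_cc cap_r); (k.+1, G_cc cup_r)]
  | cup_l, cap_l => [:: (k.+1, G_cc cap_l); (k, G_cc cup_l)]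
  | cup_l, cap_r => [:: (k.+1, G_cc cap_r); (k, G_braid true true true); (k.+1, G_cc cup_l)]
  | cup_r, cap_l => [:: (k, G_cc cap_l); (k.+1, G_braid true true false); (k, G_cc cup_r)]
  | _, _ => [::]
  end.

Definition braidB (b s : bool) : diagram := [:: (0, G_braid b (~~ b) s)].

Lemma gadget_ok b y z : ~~ is_cap y -> is_cap z ->
  blockOK (frameS b) (gadget b y z) (frameS b) [::] [:: y; z].
Proof. by case: b; case: y; case: z => //= _ _; vm_compute. Qed.

Lemma braid_ok b s : blockOK (frameS b) (braidB b s) (frameS (~~ b)) [::] [::].
Proof. by case: b; case: s; vm_compute. Qed.

Lemma close_ok b : closeOK (frameS b) (if b then cup_l else cup_r).
Proof. by case: b; vm_compute. Qed.

Lemma Arc_base a : is_cap a ->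
  Arc [:: (0, G_cc a)] (frameS (a == cap_r)) (1, dpos (frameS (a == cap_r)))
      [:: (1, upos (frameS (a == cap_r)))] [:: Some a].
Proof.
case: a => // _; (split; [by [] | by vm_compute | by [] | by [] | move=> Q]).
- have := trav_chain [::] [:: (0, G_cc cap_l)] (1, 0) 60.
  have -> : trav [::] [:: (0, G_cc cap_l)] (1, 0) 60 = ([:: (1, 1)], [:: Some cap_l]) by vm_compute.
  move=> Hc; exact: (@chainL_lift [::] [::] _ _ _ _ erefl Hc Q).
- have := trav_chain [::] [:: (0, G_cc cap_r)] (1, 1) 60.
  have -> : trav [::] [:: (0, G_cc cap_r)] (1, 1) 60 = ([:: (1, 0)], [:: Some cap_r]) by vm_compute.
  move=> Hc; exact: (@chainL_lift [::] [::] _ _ _ _ erefl Hc Q).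
Qed.

Fixpoint braids (b : bool) (m : nat) (s : bool) : diagram :=
  if m is m'.+1 then braidB b s ++ braids (~~ b) m' s else [::].

Lemma Arc_braids m s : forall P b x L R, Arc P (frameS b) x L R ->
  exists x' L' R', Arc (P ++ braids b m s) (frameS (if odd m then ~~ b else b)) x' L' R' /\
     flatten (map otoseq R') = flatten (map otoseq R).
Proof.
elim: m => [|m IH] P b x L R H /=.
  by exists x, L, R; rewrite cats0.
have [x1 [L1 [R1 [H1 E1]]]] := Arc_ext H (braid_ok b s).
have [x2 [L2 [R2 [H2 E2]]]] := IH _ _ _ _ _ H1.
exists x2, L2, R2; rewrite -cat1s catA; split.
  by move: H2; case: (odd m) => /= h; [rewrite negbK in h|]; exact h.
by rewrite E2 E1 /= cats0.
Qed.

Fixpoint wfl (l : seq cc) : bool :=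
  match l with
  | [:: y] => ~~ is_cap y
  | y :: z :: l' => [&& ~~ is_cap y, is_cap z & wfl l']
  | [::] => false
  end.

Fixpoint fin (b : bool) (l : seq cc) : diagram :=
  match l with
  | y :: ((z :: l') as l1) => gadget b y z ++ fin b l'
  | [:: y] => [:: (0, G_cc y)]
  | [::] => [::]
  end.

Lemma Arc_fin l : forall P b x L R, wfl l -> b = (last cap_l l == cup_l) -> Arc P (frameS b) x L R ->
  exists C Rc, Closed (P ++ fin b l) C Rc /\ flatten (map otoseq Rc) = flatten (map otoseq R) ++ l.
Proof.
have [n] := ubnP (size l); elim: n l => // n IH [|y [|z l]] //= Hn P b x L R.
  move=> Hy -> H; exists (x :: L), (rcons R (Some y)); split.
    apply: (Arc_close H); clear H.
    by case: y Hy.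
  by rewrite -cats1 map_cat flatten_cat.
move=> /and3P [Hy Hz Hw] Hb H.
have [x1 [L1 [R1 [H1 E1]]]] := Arc_ext H (gadget_ok b Hy Hz).
have Hl : last z l = last cap_l l by case: l Hw Hn H Hb.
have Hs : size l < n by move: Hn => /=; lia.
have [C [Rc [HC E]]] := IH l Hs _ _ _ _ _ Hw (etrans Hb (congr1 (fun t => t == cup_l) Hl)) H1.
exists C, Rc; rewrite catA; split => //.
by rewrite E E1 /= -catA.
Qed.

Lemma iso_trans d1 d2 d3 : isotopic d1 d2 -> isotopic d2 d3 -> isotopic d1 d3.
Proof. move=> H1 H2; exact: (rst_trans _ _ _ _ _ H1 H2). Qed.

Lemma iso_sym d1 d2 : isotopic d1 d2 -> isotopic d2 d1.
Proof. move=> H; exact: (rst_sym _ _ _ _ H). Qed.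

Lemma iso_refl d : isotopic d d.
Proof. exact: rst_refl. Qed.

Lemma iso_move (P Q : diagram) (S S' : obj) (X Y a1 a2 lhs rhs : diagram) :
  run [::] P = Some S -> run S X = Some S' -> run S Y = Some S' -> run S' Q = Some [::] ->
  local_move lhs rhs -> X = a1 ++ lhs ++ a2 -> Y = a1 ++ rhs ++ a2 ->
  isotopic (P ++ X ++ Q) (P ++ Y ++ Q).
Proof.
move=> HP HX HY HQ Hm EX EY; apply: rst_step; split; [|split].
- by rewrite /typed run_cat HP run_cat HX HQ.
- by rewrite /typed run_cat HP run_cat HY HQ.
exists (P ++ a1), (a2 ++ Q), lhs, rhs; split => //; split.
  by rewrite EX -!catA.
by rewrite EY -!catA.
Qed.

Ltac sc := first [by [] | by vm_compute].

Ltac gad_ll k HP HQ :=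
  apply: (iso_move (Y := [::]) (a1 := [::]) (a2 := [::]) HP _ _ HQ (lm_zig2 k)); sc.

Ltac gad_rr k HP HQ :=
  apply: (iso_move (Y := [::]) (a1 := [::]) (a2 := [::]) HP _ _ HQ (lm_zig3 k)); sc.

Ltac gad_lr k P Q HP HQ :=
  apply: (@iso_trans _ (P ++ [:: (k.+1, G_cc cap_r); (k, G_braid true true true); (k.+1, G_braid true false true);
                (k.+1, G_braid false true false); (k.+1, G_cc cup_l)] ++ Q));
  [apply: iso_sym;
   apply: (iso_move (a1 := [:: (k.+1, G_cc cap_r); (k, G_braid true true true)]) (a2 := [:: (k.+1, G_cc cup_l)])
              HP _ _ HQ (lm_R2 k.+1 true false true)); sc |];
  apply: (@iso_trans _ (P ++ [:: (k, G_cc cap_r); (k.+1, G_braid false true false); (k.+1, G_cc cup_l)] ++ Q));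
  [apply: (iso_move (a1 := [::]) (a2 := [:: (k.+1, G_braid false true false); (k.+1, G_cc cup_l)])
              HP _ _ HQ (lm_nat_right k (G_cc cap_r) true true)); sc |];
  apply: (@iso_trans _ (P ++ [:: (k, G_cc cap_r); (k.+1, G_cc cup_r)] ++ Q));
  [apply: (iso_move (a1 := [:: (k, G_cc cap_r)]) (a2 := [::])
              HP _ _ HQ (lm_R1cup_l k.+1 false)); sc |];
  apply: (iso_move (Y := [::]) (a1 := [::]) (a2 := [::]) HP _ _ HQ (lm_zig3 k)); sc.

Ltac gad_rl k P Q HP HQ :=
  apply: (@iso_trans _ (P ++ [:: (k, G_cc cap_l); (k.+1, G_braid true true false); (k, G_braid false true false);
                (k, G_braid true false true); (k, G_cc cup_r)] ++ Q));
  [apply: iso_sym;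
   apply: (iso_move (a1 := [:: (k, G_cc cap_l); (k.+1, G_braid true true false)]) (a2 := [:: (k, G_cc cup_r)])
              HP _ _ HQ (lm_R2 k false true false)); sc |];
  apply: (@iso_trans _ (P ++ [:: (k.+1, G_cc cap_l); (k, G_braid true false true); (k, G_cc cup_r)] ++ Q));
  [apply: (iso_move (a1 := [::]) (a2 := [:: (k, G_braid true false true); (k, G_cc cup_r)])
              HP _ _ HQ (lm_nat_left k (G_cc cap_l) false true)); sc |];
  apply: (@iso_trans _ (P ++ [:: (k.+1, G_cc cap_l); (k, G_cc cup_l)] ++ Q));
  [apply: (iso_move (a1 := [:: (k.+1, G_cc cap_l)]) (a2 := [::])
              HP _ _ HQ (lm_R1cup_r k true)); sc |];
  apply: (iso_move (Y := [::]) (a1 := [::]) (a2 := [::]) HP _ _ HQ (lm_zig2 k)); sc.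

Lemma iso_gadget P Q b y z : run [::] P = Some (frameS b) -> run (frameS b) Q = Some [::] ->
  ~~ is_cap y -> is_cap z -> isotopic (P ++ gadget b y z ++ Q) (P ++ Q).
Proof.
case: b => HP HQ; case: y; case: z => // _ _.
- gad_ll 0 HP HQ.
- gad_lr 0 P Q HP HQ.
- gad_rl 0 P Q HP HQ.
- gad_rr 0 HP HQ.
- gad_ll 1 HP HQ.
- gad_lr 1 P Q HP HQ.
- gad_rl 1 P Q HP HQ.
- gad_rr 1 HP HQ.
Qed.

Lemma run_gadget b y z : ~~ is_cap y -> is_cap z -> run (frameS b) (gadget b y z) = Some (frameS b).
Proof. by move=> Hy Hz; have := gadget_ok b Hy Hz; case/andP => /eqP. Qed.

Lemma run_fin l : forall b, wfl l -> b = (last cap_l l == cup_l) -> run (frameS b) (fin b l) = Some [::].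
Proof.
have [n] := ubnP (size l); elim: n l => // n IH [|y [|z l]] //= Hn b.
  by move=> Hy ->; case: y Hy.
move=> /and3P [Hy Hz Hw] Hb.
have Hl : last z l = last cap_l l by case: l Hw Hn Hb.
have Hs : size l < n by move: Hn => /=; lia.
by rewrite run_cat run_gadget // (IH l Hs _ Hw (etrans Hb (congr1 (fun t => t == cup_l) Hl))).
Qed.

Lemma iso_fin l : forall P b, wfl l -> b = (last cap_l l == cup_l) -> run [::] P = Some (frameS b) ->
  isotopic (P ++ fin b l) (P ++ [:: (0, G_cc (last cap_l l))]).
Proof.
have [n] := ubnP (size l); elim: n l => // n IH [|y [|z l]] //= Hn P b.
  by move=> _ _ _; exact: iso_refl.
move=> /and3P [Hy Hz Hw] Hb HP.
have Hl : last z l = last cap_l l by case: l Hw Hn Hb HP.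
have Hs : size l < n by move: Hn => /=; lia.
have Hb' := etrans Hb (congr1 (fun t => t == cup_l) Hl).
rewrite Hl; apply: iso_trans (IH l Hs P b Hw Hb' HP).
exact: (iso_gadget (Q := fin b l) HP (run_fin Hw Hb') Hy Hz).
Qed.

Lemma run_braids m : forall b s, run (frameS b) (braids b m s) = Some (frameS (if odd m then ~~ b else b)).
Proof.
elim: m => [|m IH] b s; first by [].
change (braids b m.+1 s) with (braidB b s ++ braids (~~ b) m s).
rewrite run_cat.
have -> : run (frameS b) (braidB b s) = Some (frameS (~~ b)) by case: b.
by rewrite IH /=; case: (odd m); rewrite /= ?negbK.
Qed.

Definition cap_of (b : bool) := if b then cap_r else cap_l.

Lemma iso_braids m s : forall b Q, run (frameS (if odd m then ~~ b else b)) Q = Some [::] ->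
  isotopic ((0, G_cc (cap_of b)) :: braids b m s ++ Q) ((0, G_cc (cap_of (if odd m then ~~ b else b))) :: Q).
Proof.
elim: m => [|m IH] b Q /=; first by move=> _; exact: iso_refl.
move=> HQ.
have HQ' : run (frameS (if odd m then ~~ ~~ b else ~~ b)) Q = Some [::].
  by move: HQ; case: (odd m); rewrite /= ?negbK.
apply: iso_trans; last first.
  have := IH (~~ b) Q HQ'.
  have -> : (if odd m then ~~ ~~ b else ~~ b) = (if ~~ odd m then ~~ b else b).
    by case: (odd m); rewrite ?negbK.
  by apply.
have HB := run_braids m (~~ b) s.
have E := @iso_move [::] (braids (~~ b) m s ++ Q) [::] (frameS (~~ b))
   [:: (0, G_cc (cap_of b)); (0, G_braid b (~~ b) s)] [:: (0, G_cc (cap_of (~~ b)))] [::] [::].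
case: b HB HQ HQ' E => HB HQ HQ' E.
- apply: (E _ _ erefl erefl erefl _ (lm_R1cap_r 0 s) erefl erefl).
  by rewrite run_cat HB.
- apply: (E _ _ erefl erefl erefl _ (lm_R1cap_l 0 s) erefl erefl).
  by rewrite run_cat HB.
Qed.

Lemma iso_final b : isotopic [:: (0, G_cc (cap_of b)); (0, G_cc (if b then cup_l else cup_r))] round_unknot.
Proof.
case: b; first exact: iso_refl.
apply: (@iso_trans _ [:: (0, G_cc cap_l); (0, G_braid false true true); (0, G_cc cup_l)]).
  apply: iso_sym.
  exact: (@iso_move [::] [::] [::] [::] [:: (0, G_cc cap_l); (0, G_braid false true true); (0, G_cc cup_l)]
            [:: (0, G_cc cap_l); (0, G_cc cup_r)] [:: (0, G_cc cap_l)] [::] _ _ erefl erefl erefl erefl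
            (lm_R1cup_l 0 true) erefl erefl).
exact: (@iso_move [::] [::] [::] [::] [:: (0, G_cc cap_l); (0, G_braid false true true); (0, G_cc cup_l)]
            [:: (0, G_cc cap_r); (0, G_cc cup_l)] [::] [:: (0, G_cc cup_l)] _ _ erefl erefl erefl erefl
            (lm_R1cap_l 0 true) erefl erefl).
Qed.

Import GRing.Theory.

Definition alt_rel (x y : cc) : bool := is_cap x != is_cap y.

Lemma alt_cycle s : alternating s -> cycle alt_rel s.
Proof.
case: s => [|x s'] // /allP Halt.
rewrite /cycle; apply/(pathP x) => i; rewrite size_rcons ltnS => Hi.
have Hin : i \in iota 0 (size (x :: s')) by rewrite mem_iota add0n /= ltnS Hi.
have := Halt i Hin; clear Hin.
have E1 : nth x (x :: rcons s' x) i = nth cap_l (x :: s') i.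
  case: i Hi => [|j] //= Hj.
  by rewrite nth_rcons Hj (set_nth_default cap_l).
rewrite /alt_rel E1 nth_rcons.
case: ltnP => Hi2.
  by rewrite modn_small ?ltnS // (set_nth_default cap_l).
have -> : i = size s' by apply/eqP; rewrite eqn_leq Hi Hi2.
by rewrite eqxx modnn.
Qed.

Lemma path_wfl l : forall x a, is_cap x -> is_cap a -> path alt_rel x (rcons l a) -> wfl l.
Proof.
have [n] := ubnP (size l); elim: n l => // n IH [|y [|z l]] //= Hn x a Hx Ha.
- by rewrite /alt_rel Hx Ha.
- by rewrite /alt_rel Hx; case: (is_cap y).
rewrite /alt_rel Hx => /and3P [Hy Hz Hp].
have Hy' : ~~ is_cap y by case: (is_cap y) Hy.
have Hz' : is_cap z by move: Hz; case: (is_cap y) Hy'; case: (is_cap z).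
rewrite Hy' Hz' /=.
by apply: (IH l _ z a Hz' Ha Hp); move: Hn => /=; lia.
Qed.

Lemma decomp s : alternating s -> s != [::] ->
  exists r a0 l, rot r s = a0 :: l /\ is_cap a0 /\ wfl l.
Proof.
move=> /alt_cycle Hc; case: s Hc => [|x s'] // Hc _.
case Hx: (is_cap x).
  exists 0, x, s'; rewrite rot0; split => //; split => //.
  exact: (path_wfl Hx Hx Hc).
case: s' Hc => [|y s''] Hc; first by move: Hc; rewrite /= /alt_rel eqxx.
have Hy : is_cap y by move: Hc => /= /andP []; rewrite /alt_rel Hx; case: (is_cap y).
exists 1, y, (rcons s'' x); rewrite rot1_cons rcons_cons; split => //; split => //.
have := Hc; rewrite -(rot_cycle 1) rot1_cons rcons_cons /= => Hc'.
exact: (path_wfl Hy Hy Hc').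
Qed.

Lemma cyc_trans' (s t u : seq cc) : cyc_eq s t -> cyc_eq t u -> cyc_eq s u.
Proof. move=> [n1 <-] [n2 <-]; exists (rot_add s n1 n2); by rewrite rot_rot_add. Qed.

Lemma cyc_rot_back (U : seq cc) r : cyc_eq (rot r U) U.
Proof. exists (size (rot r U) - r); exact: rotK. Qed.

Local Open Scope ring_scope.

Definition tsum (s : seq cc) : int := \sum_(x <- s) turning x.

Lemma writhe_cat A B : writhe (A ++ B) = writhe A + writhe B.
Proof. by rewrite /writhe big_cat. Qed.

Lemma writhe_gadget b y z : ~~ is_cap y -> is_cap z -> 2 * writhe (gadget b y z) = turning y + turning z.
Proof.
by case: b; case: y; case: z => //= _ _; rewrite /writhe !big_cons big_nil /=.
Qed.

Lemma writhe_fin l b : wfl l -> 2 * writhe (fin b l) = tsum l - turning (last cap_l l).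
Proof.
have [n] := ubnP (size l); elim: n l => // n IH [|y [|z l]] //= Hn.
  by move=> _; rewrite /writhe /tsum !big_cons !big_nil /=; lia.
move=> /and3P [Hy Hz Hw].
have Hl : last z l = last cap_l l by case: l Hw Hn.
have Hs : (size l < n)%N by move: Hn => /=; lia.
rewrite writhe_cat mulrDr (writhe_gadget b Hy Hz) (IH l Hs Hw) Hl.
have -> : tsum [:: y, z & l] = turning y + turning z + tsum l by rewrite /tsum !big_cons addrA.
lia.
Qed.

Lemma writhe_braids m : forall b s, writhe (braids b m s) = (if s then - (m%:Z) else m%:Z).
Proof.
elim: m => [|m IH] b s; first by rewrite /writhe big_nil; case: s.
change (braids b m.+1 s) with (braidB b s ++ braids (~~ b) m s).
rewrite writhe_cat IH.
have -> : writhe (braidB b s) = (if s then -1 else 1) by rewrite /writhe big_cons big_nil; case: b; case: s.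
case: s; lia.
Qed.

Lemma tsum_mod c : (4 %| (tsum (Uc c) + 2 * Wc c - Tc c))%Z.
Proof.
elim: c => [|[x w] c IH]; first by rewrite /tsum /Wc /Tc !big_nil.
rewrite /tsum /Wc /Tc /Uc /= !big_cons /=.
rewrite -/(tsum (Uc c)) -/(Wc c) -/(Tc c) in IH *.
rewrite /tT /= -signr_odd.
move: IH; case Ho: (odd `|w|%N) => /=; rewrite ?expr1 ?expr0; case: x => /=; lia.
Qed.

Lemma turning_cap a : is_cap a -> turning a = (if a == cap_r then 1 else -1).
Proof. by case: a. Qed.

Lemma turning_cup a : ~~ is_cap a -> turning a = (if a == cup_l then 1 else -1).
Proof. by case: a. Qed.

Lemma wfl_last l : wfl l -> ~~ is_cap (last cap_l l).
Proof.
have [n] := ubnP (size l); elim: n l => // n IH [|y [|z l]] //= Hn.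
move=> /and3P [_ _ Hw].
have Hl : last z l = last cap_l l by case: l Hw Hn.
by rewrite Hl; apply: (IH l) => //; move: Hn => /=; lia.
Qed.

Lemma frame_arith (B0 BT : bool) (ta tn ts W Gv T : int) :
  ta = (if B0 then 1 else -1) -> tn = (if BT then 1 else -1) ->
  (4 %| ta + ts + 2 * W - T)%Z -> 2 * Gv = ts - tn -> (T = 2 \/ T = -2) ->
  (if odd `|W - Gv|%N then ~~ B0 else B0) = BT.
Proof.
move=> -> -> H1 H2 H3.
case: B0 BT H1 H2 => [] [] H1 H2; case Ho: (odd _) => /=; case: H3 => E; rewrite E in H1; lia.
Qed.

Theorem mainTheorem4 (c : seq tcc) :
  is_tcc_cycle c -> (Tc c = 2 \/ Tc c = -2) ->
  exists g : diagram, unknot_diagram g /\ writhe g = Wc c /\ cyc_eq (ccc g) (Uc c).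
Proof.
move=> Halt HT.
have Hne : Uc c != [::].
  by apply/eqP => E; move: HT; rewrite /Tc; case: c Halt E => //= _ _; rewrite big_nil; case.
have [r [a0 [l [Hrot [Ha0 Hwf]]]]] := decomp Halt Hne.
set b0 := (a0 == cap_r).
set bt := (last cap_l l == cup_l).
set G := writhe (fin bt l).
set e := Wc c - G.
set m := `|e|%N.
set s := (e < 0).
have Hlc := wfl_last Hwf.
have Hts : tsum (Uc c) = turning a0 + tsum l.
  have Hp : perm_eq (rot r (Uc c)) (Uc c) by rewrite perm_rot.
  by rewrite /tsum -(perm_big _ Hp) Hrot big_cons.
have HG := writhe_fin bt Hwf.
have Hmod := tsum_mod c.
have Ht0 := turning_cap Ha0.
have Htn := turning_cup Hlc.
have Hframe : (if odd m then ~~ b0 else b0) = bt.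
  rewrite Hts in Hmod.
  exact: (frame_arith Ht0 Htn Hmod HG HT).
have Hb0 : a0 = cap_of b0 by move: Ha0; rewrite /b0; case: (a0).
have Hbn : last cap_l l = (if bt then cup_l else cup_r) by rewrite /bt; case: (last cap_l l) Hlc.
pose D := (0%N, G_cc a0) :: braids b0 m s ++ fin bt l.
have [C [Rc [HC ERc]]] : exists C Rc, Closed D C Rc /\ flatten (map otoseq Rc) = a0 :: l.
  have H0 := Arc_base Ha0.
  have [x1 [L1 [R1 [H1 E1]]]] := Arc_braids m s H0.
  rewrite Hframe in H1.
  have [C [Rc [HC E]]] := Arc_fin Hwf erefl H1.
  by exists C, Rc; split; [rewrite -catA in HC | rewrite E E1].
have [Hknot Hcyc] := Closed_knot HC.
exists D; split; [split => // | split].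
- have HP : run [::] ((0%N, G_cc a0) :: braids b0 m s) = Some (frameS bt).
    rewrite -Hframe -(run_braids m b0 s) Hb0 /=.
    by case: (b0).
  apply: iso_trans.
    exact: (iso_fin (P := (0%N, G_cc a0) :: braids b0 m s) Hwf erefl HP).
  rewrite cat_cons Hb0 Hbn.
  have HQ : run (frameS (if odd m then ~~ b0 else b0)) [:: (0%N, G_cc (if bt then cup_l else cup_r))] = Some [::].
    by rewrite Hframe; case: (bt).
  have := @iso_braids m s b0 _ HQ; rewrite Hframe => Hi.
  exact (iso_trans Hi (iso_final bt)).
- rewrite /D -cat1s !writhe_cat writhe_braids -/G.
  rewrite /writhe big_cons big_nil /= add0r.
  rewrite /s /m /e; case: ifP => H; lia.
- rewrite ERc -Hrot in Hcyc.
  exact: (cyc_trans' Hcyc (cyc_rot_back _ _)).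
Qed.
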